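(* Let $\alpha$ and $\theta_\alpha$ be as in the context. For $n\in\mathbb N$ put $\kappa(n):=-n\log2/\log a_n$, and $\kappa_+:=\inf\{\kappa(n):n\in\mathbb N\}$, $\kappa_-:=\sup\{\kappa(n):n\in\mathbb N\}$. Then $\theta_\alpha$ is $\kappa_+$-Hölder continuous and $\kappa_-$-sub-Hölder continuous.
   Context: Let $\mathcal U=[0,1]$. $\alpha=\{A_n:n\in\mathbb N\}$ is a countable partition of $\mathcal U$ (up to the point $0$) into left-open, right-closed intervals of positive length, ordered from right to left starting with $A_1$, accumulating only at $0$; $a_n$ is the length of $A_n$, $t_n:=\sum_{k\ge n}a_k$, $A_n=(t_{n+1},t_n]$. $L_\alpha(x)=(t_n-x)/a_n$ on $A_n$, $L_\alpha(0)=0$. For $x\ne0$, the $\alpha$-Lüroth digits $\ell_k$ are defined by $L_\alpha^{k-1}(x)\in A_{\ell_k}$ (terminating at step $k$ iff $L_\alpha^{k-1}(x)=t_n$ for some $n\ge2$), written $x=[\ell_1,\ell_2,\dots]_\alpha$. The map $\theta_\alpha:\mathcal U\to\mathcal U$ is $\theta_\alpha(0)=0$ and $\theta_\alpha([\ell_1,\ell_2,\dots]_\alpha):=-2\sum_{k\ge1}(-1)^k2^{-\sum_{i=1}^k\ell_i}$. A map $S:\mathcal U\to\mathcal U$ is $\kappa$-Hölder continuous if $|S(x)-S(y)|\le c|x-y|^\kappa$ for some $c>0$ and all $x,y$; for $\kappa\in(0,\infty)$ it is $\kappa$-sub-Hölder continuous if there is $c>0$ with $|S(x)-S(y)|\ge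 c|x-y|^\kappa$ for all $x,y\in\mathcal U$. *)

(* Defs.v *)
From HB Require Import structures.
From mathcomp Require Import all_boot all_order all_algebra.
From mathcomp Require Import all_classical all_reals all_analysis.
Set Implicit Arguments. Unset Strict Implicit. Unset Printing Implicit Defensive.
Import Order.TTheory GRing.Theory Num.Theory.
Import numFieldNormedType.Exports.
Local Open Scope classical_set_scope.
Local Open Scope ring_scope.

Section Luroth.
Variable R : realType.
(* a n is the length of A_n, for n >= 1 (a 0 is unused). *)
Variable a : nat -> R.

Definition is_alpha_partition : Prop :=
  (forall n, (1 <= n)%N -> 0 < a n) /\
  ((fun N => \sum_(1 <= k < N) a k) @ \oo --> (1 : R)).

Definition tl (n : nat) : R := \big[+%R/0%R]_(n <= k <oo) a k.

(* the index n >= 1 with y in A_n = (t_{n+1}, t_n] (default 0 if none, e.g. y = 0) *)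
Definition digit (y : R) : nat :=
  xget 0%N [set n | (1 <= n)%N /\ tl n.+1 < y <= tl n].

Definition Lalpha (y : R) : R :=
  if y == 0 then 0 else (tl (digit y) - y) / a (digit y).

(* k-th term (k >= 1) of the series defining theta: zero once the expansion
   has terminated (L^{k-1}(x) = 0), else (-1)^k 2^{-(l_1+...+l_k)} *)
Definition theta_term (x : R) (k : nat) : R :=
  if iter k.-1 Lalpha x == 0 then 0
  else (-1) ^+ k * (2 : R) ^- (\sum_(i < k) digit (iter i Lalpha x))%N.

Definition theta (x : R) : R :=
  if x == 0 then 0 else -2 * \big[+%R/0%R]_(1 <= k <oo) theta_term x k.

Definition kappa (n : nat) : R := - (n%:R * ln (2 : R)) / ln (a n).

Definition kappa_set : set R := [set kappa n | n in [set n : nat | (1 <= n)%N]].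

End Luroth.

Definition holder_cont (R : realType) (kap : R) (S : R -> R) : Prop :=
  exists2 c : R, 0 < c &
    forall x y, 0 <= x <= 1 -> 0 <= y <= 1 -> `|S x - S y| <= c * (`|x - y| `^ kap).

Definition sub_holder_cont (R : realType) (kap : R) (S : R -> R) : Prop :=
  0 < kap /\ exists2 c : R, 0 < c &
    forall x y, 0 <= x <= 1 -> 0 <= y <= 1 -> c * (`|x - y| `^ kap) <= `|S x - S y|.

(* Main.v *)
Require Import Defs.
From HB Require Import structures.
From mathcomp Require Import all_boot all_order all_algebra.
From mathcomp Require Import all_classical all_reals all_analysis.
From mathcomp Require Import ring lra.
Import Order.TTheory GRing.Theory Num.Theory.
Import numFieldNormedType.Exports.
Local Open Scope classical_set_scope.
Local Open Scope ring_scope.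
Section Work.
Variable R : realType.
Variable a : nat -> R.
Hypothesis Ha : is_alpha_partition a.

Definition P n := \sum_(1 <= k < n) a k.

Lemma a_gt0 {n} : (1 <= n)%N -> 0 < a n.
Proof. by case: Ha => h _; apply: h. Qed.

Lemma P_cvg : P n @[n --> \oo] --> (1:R).
Proof. by case: Ha. Qed.

Lemma P0 : P 0 = 0. Proof. by rewrite /P big_geq. Qed.
Lemma P1 : P 1 = 0. Proof. by rewrite /P big_geq. Qed.
Lemma PS {n} : (1 <= n)%N -> P n.+1 = P n + a n.
Proof. by move=> h; rewrite /P big_nat_recr. Qed.

Lemma P_nd : nondecreasing_seq P.
Proof.
apply/nondecreasing_seqP => n; case: n => [|n]; first by rewrite P0 P1.
rewrite [P n.+2]PS //; have := @a_gt0 n.+1 (ltn0Sn n); lra.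
Qed.

Lemma P_le1 n : P n <= 1.
Proof.
have := nondecreasing_cvgn_le P_nd (cvgP _ P_cvg) n.
by rewrite (cvg_lim _ P_cvg).
Qed.

Lemma tl_cvg {n} : (1 <= n)%N ->
  (fun N => \sum_(n <= k < N) a k) @ \oo --> (1 - P n).
Proof.
move=> hn; rewrite -(cvg_shiftn n).
have -> : [sequence \sum_(n <= k < (N + n)%N) a k]_N = (fun N => P (N + n)%N - P n).
  apply/funext => N /=; rewrite /P [in RHS](@big_cat_nat _ _ _ n 1) ?leq_addl //=.
  lra.
have h1 : P (N + n)%N @[N --> \oo] --> (1:R) by rewrite (cvg_shiftn n P); exact: P_cvg.
exact: (cvgB h1 (cvg_cst _)).
Qed.

Lemma tlE {n} : (1 <= n)%N -> tl a n = 1 - P n.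
Proof. by move=> hn; rewrite /tl (cvg_lim _ (tl_cvg hn)). Qed.

Lemma tl1 : tl a 1 = 1.
Proof. by rewrite tlE // P1 subr0. Qed.

Lemma tlS {n} : (1 <= n)%N -> tl a n.+1 = tl a n - a n.
Proof. by move=> h; rewrite !tlE ?PS // ?(leq_trans h) //; lra. Qed.

Lemma tl_gt0 {n} : (1 <= n)%N -> 0 < tl a n.
Proof.
move=> h; rewrite tlE //; have := P_le1 n.+1; rewrite PS //.
have := a_gt0 h; lra.
Qed.

Lemma tl_le {m n} : (1 <= m)%N -> (m <= n)%N -> tl a n <= tl a m.
Proof.
move=> hm hmn; rewrite !tlE ?(leq_trans hm) //.
have := P_nd _ _ hmn; lra.
Qed.

Lemma tl_lt {m n} : (1 <= m)%N -> (m < n)%N -> tl a n < tl a m.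
Proof.
move=> hm hmn; apply: (le_lt_trans (tl_le (ltn0Sn m) hmn)).
rewrite tlS //; have := a_gt0 hm; lra.
Qed.

Lemma a_lt1 {n} : (1 <= n)%N -> a n < 1.
Proof.
move=> h; have := tlS h; have := tl_gt0 (leqW h); have := tl_le (leqnn 1) h.
rewrite tl1; lra.
Qed.

Definition inA n y := (1 <= n)%N /\ tl a n.+1 < y <= tl a n.

Lemma inA_uniq {n m y} : inA n y -> inA m y -> n = m.
Proof.
wlog: n m / (n <= m)%N.
  move=> H h1 h2; case: (leqP n m) => hnm; first exact: H.
  by apply/esym/H => //; apply: ltnW.
move=> hnm [hn /andP[h1 h2]] [hm /andP[h3 h4]].
case: (ltngtP n m) hnm => // hlt _.
exfalso; have := tl_le (ltn0Sn n) hlt; lra.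
Qed.

Lemma inA_ex y : 0 < y <= 1 -> exists n, inA n y.
Proof.
move=> /andP[y0 y1].
have hlim : (1 - y / 2) < limn P by rewrite (cvg_lim _ P_cvg) // ltrBlDr ltrDl divr_gt0.
have [N _ hN] := lt_lim P_nd (cvgP _ P_cvg) hlim.
have ex : exists m, 1 - P m < y.
  exists N; have := hN N (leqnn N); rewrite /=; lra.
case: (ex_minnP ex) => m hm hmin.
have hm2 : (2 <= m)%N.
  case: m hm hmin => [|[|m]] //; rewrite ?P0 ?P1; lra.
have hm1 : (1 <= m.-1)%N by case: m hm2 {hm hmin} => [|[|m]].
exists m.-1; split => //.
have hmm : m.-1.+1 = m by case: m hm2 {hm hmin hm1}.
rewrite hmm !tlE //; last by rewrite -hmm.
rewrite hm /=; rewrite leNgt; apply/negP => hc.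
have := hmin _ hc; rewrite -{1}hmm ltnn.
by [].
Qed.

Lemma digit_eq {n y} : inA n y -> digit a y = n.
Proof.
by move=> h; apply: xget_unique => // k hk; apply: (inA_uniq hk h).
Qed.

Lemma digitP {y} : 0 < y <= 1 -> inA (digit a y) y.
Proof. by move=> /inA_ex [n h]; rewrite (digit_eq h). Qed.

Notation L := (Lalpha a).
Notation d := (digit a).

Lemma LaE y : 0 < y <= 1 -> L y = (tl a (d y) - y) / a (d y).
Proof. by move=> /andP[y0 _]; rewrite /Lalpha gt_eqF. Qed.

Lemma La0 : L 0 = 0.
Proof. by rewrite /Lalpha eqxx. Qed.

Lemma La_bnd {y} : 0 < y <= 1 -> 0 <= L y < 1.
Proof.
move=> hy; have [hn /andP[h1 h2]] := digitP hy; rewrite LaE //.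
have an := a_gt0 hn; have := tlS hn; move: h1; set t := tl a _.+1 => h1 ht.
apply/andP; split; first by rewrite divr_ge0 //; [lra | lra].
by rewrite ltr_pdivrMr // mul1r; lra.
Qed.

Lemma La01 y : 0 <= y <= 1 -> 0 <= L y <= 1.
Proof.
move=> /andP[y0 y1]; case: (eqVneq y 0) => [->|yn0]; first by rewrite La0 lexx ler01.
have /La_bnd/andP[h1 h2] : 0 < y <= 1 by rewrite y1 andbT lt_neqAle eq_sym yn0.
by rewrite h1 ltW.
Qed.

Lemma iter01 {y} k : 0 <= y <= 1 -> 0 <= iter k L y <= 1.
Proof. by move=> hy; elim: k => [|k IH] //=; apply: La01. Qed.

Lemma iter_0 k : iter k L 0 = 0.
Proof. by elim: k => [|k IH] //=; rewrite IH La0. Qed.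

Lemma pow2V_le {m n} : (m <= n)%N -> (2:R)^-n <= 2^-m.
Proof.
move=> h; rewrite -(subnK h) exprD invfM.
apply: ler_piMl; first by rewrite invr_ge0 exprn_ge0.
by rewrite invf_le1 ?exprn_gt0 // exprn_ege1 // ler1n.
Qed.

Lemma pow2V_gt0 n : 0 < (2:R)^-n.
Proof. by rewrite invr_gt0 exprn_gt0. Qed.

Lemma tt_bnd y k : 0 <= y <= 1 -> `|theta_term a y k| <= 2^-k.
Proof.
move=> hy; rewrite /theta_term; case: eqP => h.
  by rewrite normr0 ltW // pow2V_gt0.
rewrite normrM normrX normrN1 expr1n mul1r ger0_norm; last by rewrite ltW // pow2V_gt0.
apply: pow2V_le.
apply: (@leq_trans (\sum_(i < k) 1)%N); first by rewrite sum1_card card_ord.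
apply: leq_sum => i _.
have hi : iter i L y != 0.
  apply/eqP => hi; apply: h.
  have -> : k.-1 = (k.-1 - i + i)%N by rewrite subnK // -ltnS (leq_trans (ltn_ord i) (leqSpred k)).
  by rewrite iterD hi iter_0.
have /andP[i0 i1] := iter01 i hy.
have : 0 < iter i L y <= 1 by rewrite i1 andbT lt_neqAle eq_sym hi.
by move=> /digitP [].
Qed.

Definition ff x k := theta_term a x k.+1.

Lemma tt0 k : theta_term a 0 k = 0.
Proof. by rewrite /theta_term iter_0 eqxx. Qed.

Lemma tt1 x : x != 0 -> theta_term a x 1 = - 2^-(d x).
Proof. by move=> hx; rewrite /theta_term /= (negbTE hx) big_ord1 /= expr1 mulN1r. Qed.

Lemma tt_rec x k : theta_term a x k.+2 = - 2^-(d x) * theta_term a (L x) k.+1.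
Proof.
rewrite /theta_term /= -iterSr.
case: eqP => _; first by rewrite mulr0.
rewrite big_ord_recl /=.
under eq_bigr => i _ do rewrite add0n -iterS iterSr.
rewrite exprD invfM exprS; ring.
Qed.

Lemma ff_cvg {y} : 0 <= y <= 1 -> cvgn (series (ff y)).
Proof.
move=> hy; apply: normed_cvg.
apply: (@series_le_cvg _ (fun n => `|ff y n|) (geometric (2^-1) (2^-1))).
- by move=> n.
- by move=> n; rewrite /geometric /= mulr_ge0 // ?exprn_ge0 // invr_ge0.
- move=> n; rewrite /geometric /= -exprS exprVn; exact: tt_bnd.
- apply: is_cvg_geometric_series; rewrite ger0_norm ?invr_ge0 //.
  by rewrite invf_lt1 // ltr1n.
Qed.

Definition ss y := limn (series (ff y)).

Lemma sr_cvg {y} : 0 <= y <= 1 ->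
  (fun N => \sum_(1 <= k < N) theta_term a y k) @ \oo --> ss y.
Proof.
move=> hy; rewrite -cvg_shiftS.
have -> : [sequence \sum_(1 <= k < n.+1) theta_term a y k]_n = series (ff y).
  by apply/funext => n /=; rewrite big_add1 /= seriesEnat.
exact: ff_cvg.
Qed.

Lemma thetaE {x} : 0 <= x <= 1 -> x != 0 -> theta a x = -2 * ss x.
Proof.
move=> hx hx0; rewrite /theta (negbTE hx0); congr (_ * _).
exact: (cvg_lim _ (sr_cvg hx)).
Qed.

Lemma ss0 : ss 0 = 0.
Proof.
rewrite /ss; have -> : series (ff 0) = fun=> 0.
  apply/funext => n; rewrite seriesEnat /=; apply: big1 => i _; exact: tt0.
exact: lim_cst.
Qed.

Lemma theta_ss {x} : 0 <= x <= 1 -> theta a x = -2 * ss x.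
Proof.
move=> hx; case: (eqVneq x 0) => [->|]; last exact: thetaE.
by rewrite ss0 mulr0 /theta eqxx.
Qed.

Lemma theta0 : theta a 0 = 0.
Proof. by rewrite /theta eqxx. Qed.

Lemma ss_rec {x} : 0 < x <= 1 -> ss x = - 2^-(d x) * (1 + ss (L x)).
Proof.
move=> hx; have hL : 0 <= L x <= 1 by have /andP[? ?] := La_bnd hx; apply/andP; split => //; apply: ltW.
have hx0 : x != 0 by case/andP: hx => h _; rewrite gt_eqF.
apply: cvg_lim => //; rewrite -cvg_shiftS.
have -> : [sequence series (ff x) n.+1]_n =
    (fun n => - 2^-(d x) * (1 + series (ff (L x)) n)).
  apply/funext => n /=; rewrite !seriesEnat /= big_nat_recl //.
  rewrite /ff tt1 // mulrDr mulr1 big_distrr /=; congr (_ + _).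
  by apply: eq_bigr => i _; rewrite tt_rec.
apply: cvgMl_tmp; apply: cvgD; first exact: cvg_cst.
exact: ff_cvg.
Qed.

Lemma theta_rec {x} : 0 < x <= 1 -> theta a x = 2^-(d x) * (2 - theta a (L x)).
Proof.
move=> hx; have hL : 0 <= L x <= 1 by have /andP[? ?] := La_bnd hx; apply/andP; split => //; apply: ltW.
have hx' : 0 <= x <= 1 by case/andP: hx => h1 h2; rewrite h2 ltW.
rewrite theta_ss // theta_ss // ss_rec //; ring.
Qed.

Lemma le_eps (x y c : R) : 0 <= c -> (forall N, x <= y + c * 2^-N) -> x <= y.
Proof.
move=> c0 h; rewrite leNgt; apply/negP => hlt.
have e0 : 0 < x - y by rewrite subr_gt0.
set N := Num.Def.archi_bound (c / (x - y)).
have hN := archi_boundP (divr_ge0 c0 (ltW e0)); rewrite -/N in hN.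
have h2 : (N%:R : R) < 2 ^+ N by rewrite -natrX ltr_nat ltn_expl.
have := h N.
have hc : c * 2^-N < x - y.
  rewrite ltr_pdivrMr ?exprn_gt0 //.
  rewrite ltr_pdivrMr // in hN.
  have := ler_wpM2r (ltW e0) (ltW h2); lra.
lra.
Qed.

Lemma ffn_cvg {y} : 0 <= y <= 1 -> cvgn (series (fun n => `|ff y n|)).
Proof.
move=> hy.
apply: (@series_le_cvg _ (fun n => `|ff y n|) (geometric (2^-1) (2^-1))).
- by move=> n.
- by move=> n; rewrite /geometric /= mulr_ge0 // ?exprn_ge0 // invr_ge0.
- move=> n; rewrite /geometric /= -exprS exprVn; exact: tt_bnd.
- apply: is_cvg_geometric_series; rewrite ger0_norm ?invr_ge0 //.
  by rewrite invf_lt1 // ltr1n.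
Qed.

Lemma ss_bnd {y} : 0 <= y <= 1 -> `|ss y| <= 1.
Proof.
move=> hy; apply: le_trans (lim_series_norm (ffn_cvg hy)) _.
have hg : series (geometric (2^-1 : R) (2^-1)) @ \oo --> (1:R).
  have := @cvg_geometric_series R (2^-1) (2^-1).
  have -> : (2^-1 * (1 - 2^-1)^-1 : R) = 1.
    have -> : (1 - 2^-1 : R) = 2^-1 by field.
    by rewrite divff.
  by apply; rewrite ger0_norm ?invr_ge0 // invf_lt1 // ltr1n.
rewrite -(cvg_lim _ hg) //; apply: lim_series_le.
- exact: ffn_cvg.
- exact: cvgP hg.
- move=> n; rewrite /geometric /= -exprS exprVn; exact: tt_bnd.
Qed.

Lemma theta_bnd2 {y} : 0 <= y <= 1 -> -2 <= theta a y <= 2.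
Proof.
move=> hy; rewrite theta_ss //; have := ss_bnd hy; rewrite ler_norml => /andP[h1 h2].
apply/andP; split; lra.
Qed.

Lemma d_ge1 {x} : 0 < x <= 1 -> (1 <= d x)%N.
Proof. by move=> /digitP []. Qed.

Lemma pow2V_le_half {n} : (1 <= n)%N -> (2:R)^-n <= 2^-1.
Proof. by move=> h; have := pow2V_le h; rewrite expr1. Qed.

Lemma theta01 {y} : 0 <= y <= 1 -> 0 <= theta a y <= 1.
Proof.
move=> hy.
suff H : forall N, forall z, 0 <= z <= 1 -> - (2 * 2^-N) <= theta a z <= 1 + 2 * 2^-N.
  apply/andP; split.
  - apply: (@le_eps _ _ 2) => // N; have := H N y hy; case/andP; lra.
  - apply: (@le_eps _ _ 2) => // N; have := H N y hy; case/andP; lra.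
elim => [|N IH] z hz.
  by rewrite expr0 invr1 mulr1; have := theta_bnd2 hz; case/andP => h1 h2; apply/andP; split; lra.
case: (eqVneq z 0) => [->|z0].
  by rewrite theta0; have := pow2V_gt0 N.+1; move=> hp; apply/andP; split; lra.
have hz' : 0 < z <= 1 by case/andP: hz => h1 h2; rewrite h2 andbT lt_neqAle eq_sym z0 h1.
rewrite theta_rec //.
have hL : 0 <= L z <= 1 by have /andP[? ?] := La_bnd hz'; apply/andP; split => //; apply: ltW.
have /andP[q1 q2] := IH _ hL.
have p0 := pow2V_gt0 (d z); have p1 := pow2V_le_half (d_ge1 hz').
have e0 := pow2V_gt0 N.
have -> : (2:R)^-N.+1 = 2^-N / 2 by rewrite exprS invfM mulrC.
set p := 2^-(d z) in p0 p1 *; set e := 2^-N in e0 q1 q2 *; set q := theta a (L z) in q1 q2 *.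
have h1 : 0 <= p * (1 + 2 * e - q) by rewrite mulr_ge0 //; [exact: ltW| lra].
have h2 : 0 <= 2 * e * (2^-1 - p) by rewrite mulr_ge0 //; [rewrite mulr_ge0 //; exact: ltW| lra].
have h3 : 0 <= (2 + 2 * e) * (2^-1 - p) by rewrite mulr_ge0 //; lra.
have h4 : 0 <= p * (q + 2 * e) by rewrite mulr_ge0 //; [exact: ltW| lra].
have hh : (2:R)^-1 * 2 = 1 by rewrite mulVf.
apply/andP; split; nra.
Qed.

Lemma ln_a_lt0 {n} : (1 <= n)%N -> ln (a n) < 0.
Proof. by move=> h; apply: ln_lt0; rewrite a_gt0 // a_lt1. Qed.

Lemma ln2_gt0 : 0 < ln (2:R).
Proof. by apply: ln_gt0; rewrite ltr1n. Qed.

Lemma kappa_gt0 {n} : (1 <= n)%N -> 0 < kappa a n.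
Proof.
move=> h; rewrite /kappa; have := ln_a_lt0 h; have := ln2_gt0 => h1 h2.
have hA : 0 < n%:R * ln (2:R) by rewrite mulr_gt0 // ltr0n.
have hB : (ln (a n))^-1 < 0 by rewrite invr_lt0.
move: hA hB; set A := _ * _; set B := _^-1 => hA hB; nra.
Qed.

Lemma powa {n} (k : R) : (1 <= n)%N -> a n `^ k = expR (k * ln (a n)).
Proof. by move=> h; rewrite /powR gt_eqF // a_gt0. Qed.

Lemma two_pow {n} : (1 <= n)%N -> (2:R)^-n = expR (kappa a n * ln (a n)).
Proof.
move=> h; rewrite /kappa mulrAC mulfK; last by rewrite lt_eqF // ln_a_lt0.
by rewrite expRN expRM_natl lnK // posrE.
Qed.

Lemma key_low {n} (k : R) : (1 <= n)%N -> k <= kappa a n -> (2:R)^-n <= a n `^ k.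
Proof.
move=> h hk; rewrite powa // two_pow // ler_expR.
by rewrite ler_wnM2r // ltW // ln_a_lt0.
Qed.

Lemma key_high {n} (k : R) : (1 <= n)%N -> kappa a n <= k -> a n `^ k <= (2:R)^-n.
Proof.
move=> h hk; rewrite powa // two_pow // ler_expR.
by rewrite ler_wnM2r // ltW // ln_a_lt0.
Qed.

Lemma kset_ne : kappa_set a !=set0.
Proof. by exists (kappa a 1); exists 1%N. Qed.

Lemma kset_lb : lbound (kappa_set a) 0.
Proof. by move=> _ [n hn <-]; apply/ltW/kappa_gt0. Qed.

Lemma kinf_ge0 : 0 <= inf (kappa_set a).
Proof. exact: lb_le_inf kset_ne kset_lb. Qed.

Lemma kinf_le {n} : (1 <= n)%N -> inf (kappa_set a) <= kappa a n.
Proof.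
move=> h; apply: (ge_inf); first by exists 0; exact: kset_lb.
by exists n.
Qed.

Lemma ksup_ge {n} : has_ubound (kappa_set a) -> (1 <= n)%N -> kappa a n <= sup (kappa_set a).
Proof. by move=> hu h; apply: ub_le_sup => //; exists n. Qed.

Lemma ksup_gt0 : has_ubound (kappa_set a) -> 0 < sup (kappa_set a).
Proof. by move=> hu; apply: lt_le_trans (kappa_gt0 (leqnn 1)) (ksup_ge hu (leqnn 1)). Qed.

Lemma pow2S m : (2:R)^-m.+1 = 2^-m / 2.
Proof. by rewrite exprS invfM mulrC. Qed.

Lemma inA_d {x} : 0 < x <= 1 -> [/\ (1 <= d x)%N, tl a (d x) - a (d x) < x & x <= tl a (d x)].
Proof. by move=> h; have [h1 /andP[h2 h3]] := digitP h; rewrite -tlS. Qed.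

Lemma LaM {x} : 0 < x <= 1 -> L x * a (d x) = tl a (d x) - x.
Proof.
move=> h; have [h1 _ _] := inA_d h; rewrite LaE // divfK //.
by rewrite gt_eqF // a_gt0.
Qed.

Lemma La_in {x} : 0 < x <= 1 -> 0 <= L x <= 1.
Proof. by move=> h; have /andP[? ?] := La_bnd h; apply/andP; split => //; apply: ltW. Qed.

Lemma pos01 {x : R} : 0 <= x <= 1 -> x != 0 -> 0 < x <= 1.
Proof. by case/andP=> h1 h2 h; rewrite h2 andbT lt_neqAle eq_sym h h1. Qed.

Lemma d_mono {x y} : 0 < x <= 1 -> 0 < y <= 1 -> x <= y -> (d y <= d x)%N.
Proof.
move=> hx hy xy; have [h1 h2 h3] := inA_d hx; have [h4 h5 h6] := inA_d hy.
rewrite leqNgt; apply/negP => hlt.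
have := tl_le (ltn0Sn (d x)) hlt; have := tlS h1; lra.
Qed.

Section Holder.
Variable k : R.
Hypothesis k0 : 0 <= k.
Hypothesis hk : forall n, (1 <= n)%N -> (2:R)^-n <= a n `^ k.

Let pw u := u `^ k.

Lemma pw_le u v : 0 <= u -> u <= v -> pw u <= pw v.
Proof. by move=> u0 uv; apply: ge0_ler_powR => //; rewrite nnegrE //; apply: le_trans uv. Qed.

Lemma pwM u v : 0 <= u -> 0 <= v -> pw (u * v) = pw u * pw v.
Proof. by move=> u0 v0; rewrite /pw powRM. Qed.

Lemma pw_ge0 u : 0 <= pw u.
Proof. exact: powR_ge0. Qed.

Lemma zero_ub {u} : 0 <= u <= 1 -> theta a u <= 4 * pw u.
Proof.
move=> hu; case: (eqVneq u 0) => [->|u0]; first by rewrite theta0 mulr_ge0 // pw_ge0.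
have hu' := pos01 hu u0; have [h1 h2 h3] := inA_d hu'.
rewrite theta_rec //; have /andP[t0 t1] := theta01 (La_in hu').
have hp : 2^-(d u).+1 <= pw (a (d u).+1) := hk _ (ltn0Sn (d u)).
have hpu : pw (a (d u).+1) <= pw u.
  apply: pw_le; first exact/ltW/a_gt0.
  have e1 := tlS h1; have e2 := tlS (ltn0Sn (d u)); have e3 := tl_gt0 (ltn0Sn (d u).+1).
  by clear -Ha k0 hk pw e1 e2 e3 h2; lra.
rewrite pow2S in hp.
have p0 := pow2V_gt0 (d u); have q := mulr_ge0 (ltW (pow2V_gt0 (d u))) t0.
move: (d u) hp hpu p0 q => n hp hpu p0 q; clear -Ha k0 hk pw hp hpu p0 q; lra.
Qed.

Lemma one_ub {v} : 0 <= v <= 1 -> 1 - theta a v <= 4 * pw (1 - v).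
Proof.
move=> hv; case: (eqVneq v 0) => [->|v0].
  by rewrite theta0 subr0 /pw powR1; clear -Ha k0 hk pw; lra.
have hv' := pos01 hv v0; have [h1 h2 h3] := inA_d hv'.
have hL := La_in hv'; have /andP[t0 t1] := theta01 hL.
have ha1 : 2^-1 <= pw (a 1) by rewrite /pw -(expr1 (2:R)); exact: hk.
case: (ltngtP (d v) 1) => hd.
- by rewrite ltnS leqn0 in hd; move: h1; rewrite (eqP hd).
-
  have hpa : pw (a 1) <= pw (1 - v).
    apply: pw_le; first exact/ltW/a_gt0.
    have e1 := tl_le (isT : (0 < 2)%N) hd; have e2 := tlS (leqnn 1); rewrite tl1 in e2.
    by clear -Ha k0 hk pw e1 e2 h3; lra.
  have /andP[s0 s1] := theta01 hv.
  by clear -Ha k0 hk pw hpa ha1 s0; lra.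
- rewrite theta_rec // hd expr1.
  have hz := zero_ub hL.
  have hM := LaM hv'; rewrite hd tl1 in hM.
  have -> : pw (1 - v) = pw (L v) * pw (a 1) by rewrite -hM pwM //; [case/andP: hL|exact/ltW/a_gt0].
  have hA := pw_ge0 (L v).
  move: hz ha1 hA; set A := pw (L v); set B := pw (a 1) => hz ha1 hA.
  have hAB : 0 <= A * (B - 2^-1) by apply: mulr_ge0 => //; rewrite subr_ge0.
  have h2i : (2:R)^-1 = 1/2 by rewrite div1r.
  rewrite h2i in hAB ha1 *.
  by clear -Ha k0 hk pw hAB hz; lra.
Qed.

Lemma HA {x} : 0 < x <= 1 -> 2^-(d x) * theta a (L x) <= 4 * pw (tl a (d x) - x).
Proof.
move=> hx; have [h1 h2 h3] := inA_d hx; have hL := La_in hx.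
have hz := zero_ub hL; have /andP[t0 t1] := theta01 hL.
rewrite -(LaM hx) pwM //; [|by case/andP: hL|exact/ltW/a_gt0].
have hp : 2^-(d x) <= pw (a (d x)) := hk _ h1.
have hA := pw_ge0 (L x); have hp0 := pow2V_gt0 (d x).
move: hz hp hA hp0; set A := pw (L x); set B := pw (a (d x)); set p := 2^-(d x) => hz hp hA hp0.
have q1 : 0 <= p * (4 * A - theta a (L x)) by apply: mulr_ge0; [exact: ltW|rewrite subr_ge0].
have q2 : 0 <= A * (B - p) by apply: mulr_ge0; rewrite ?subr_ge0.
by clear -Ha k0 hk pw q1 q2; lra.
Qed.

Lemma HB {x} : 0 < x <= 1 -> 2^-(d x) * (1 - theta a (L x)) <= 4 * pw (x - tl a (d x).+1).
Proof.
move=> hx; have [h1 h2 h3] := inA_d hx; have hL := La_in hx.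
have hz := one_ub hL; have /andP[t0 t1] := theta01 hL.
have -> : x - tl a (d x).+1 = (1 - L x) * a (d x).
  by rewrite mulrBl mul1r (LaM hx) (tlS h1); ring.
rewrite pwM //; [|by case/andP: hL => _ ?; rewrite subr_ge0|exact/ltW/a_gt0].
have hp : 2^-(d x) <= pw (a (d x)) := hk _ h1.
have hA := pw_ge0 (1 - L x); have hp0 := pow2V_gt0 (d x).
move: hz hp hA hp0; set A := pw (1 - L x); set B := pw (a (d x)); set p := 2^-(d x) => hz hp hA hp0.
have q1 : 0 <= p * (4 * A - (1 - theta a (L x))) by apply: mulr_ge0; [exact: ltW|rewrite subr_ge0].
have q2 : 0 <= A * (B - p) by apply: mulr_ge0; rewrite ?subr_ge0.
by clear -Ha k0 hk pw q1 q2; lra.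
Qed.

Lemma holder_N N : forall x y, 0 <= x <= 1 -> 0 <= y <= 1 ->
  `|theta a x - theta a y| <= 10 * pw `|x - y| + 2 * 2^-N.
Proof.
elim: N => [|N IH] x y hx hy.
  have /andP[s0 s1] := theta01 hx; have /andP[s2 s3] := theta01 hy.
  have hp := pw_ge0 `|x - y|.
  rewrite expr0 invr1 mulr1.
  rewrite ler_norml; apply/andP; split; by clear -Ha k0 hk pw s0 s1 s2 s3 hp; lra.
wlog xy : x y hx hy / x <= y.
  move=> H; case: (leP x y) => h; first exact: H.
  rewrite distrC (distrC x); apply: H => //; exact: ltW.
have e0 := pow2V_gt0 N.
rewrite pow2S.
case: (eqVneq x 0) => [->|x0].
  rewrite theta0 sub0r normrN distrC subr0.
  have hyy : 0 <= y by case/andP: hy.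
  rewrite ger0_norm; last by case/andP: (theta01 hy).
  rewrite ger0_norm //.
  have hz := zero_ub hy; have hp := pw_ge0 y.
  by clear -Ha k0 hk pw hz hp e0; lra.
have hx' := pos01 hx x0.
have hy' : 0 < y <= 1 by case/andP: hx' => h _; case/andP: hy => _ h'; rewrite h' (lt_le_trans h xy).
have hmn := d_mono hx' hy' xy.
have [h1 h2 h3] := inA_d hx'; have [h4 h5 h6] := inA_d hy'.
have hLx := La_in hx'; have hLy := La_in hy'.
have /andP[tx0 tx1] := theta01 hLx; have /andP[ty0 ty1] := theta01 hLy.
have hMx := LaM hx'; have hMy := LaM hy'.
have hAx := HA hx'; have hBy := HB hy'.
rewrite (theta_rec hx') (theta_rec hy').
move: h1 h2 h3 hmn hMx hAx h4 h5 h6 hMy hBy.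
move: (d x) (d y) => n m h1 h2 h3 hmn hMx hAx h4 h5 h6 hMy hBy.
case: (ltngtP m n) hmn => // hmn _.
-
  have hpn := pow2V_gt0 n; have hpm := pow2V_gt0 m.
  have hpnm : 2 * 2^-n <= (2:R)^-m.
    have := pow2V_le hmn; rewrite pow2S => hh; by clear -Ha k0 hk pw hh; lra.
  have htl1 : tl a n <= tl a m.+1 := tl_le (ltn0Sn m) hmn.
  have htlS := tlS h4.
  have hyx : 0 <= y - x by rewrite subr_ge0.
  rewrite [`|x - y|]distrC (ger0_norm hyx).
  have q1 : 0 <= 2^-n * theta a (L x) by apply: mulr_ge0 (ltW hpn) tx0.
  have q2 : 0 <= 2^-m * (1 - theta a (L y)) by apply: mulr_ge0; [exact: ltW|rewrite subr_ge0].
  have hD : 2^-m * (2 - theta a (L y)) - 2^-n * (2 - theta a (L x)) =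
     2^-m * (1 - theta a (L y)) + (2^-m - 2 * 2^-n) + 2^-n * theta a (L x) by ring.
  rewrite distrC hD ger0_norm; last by clear -Ha k0 hk pw q1 q2 hpnm; lra.
  have p1 : pw (tl a n - x) <= pw (y - x) by apply: pw_le; clear -Ha k0 hk pw h3 htl1 htlS h5; lra.
  have p2 : pw (y - tl a m.+1) <= pw (y - x) by apply: pw_le; clear -Ha k0 hk pw h3 htl1 htlS h5; lra.
  have p3 : 2^-m - 2 * 2^-n <= 2 * pw (y - x).
    have hpy := pw_ge0 (y - x).
    case: (ltngtP n m.+1) hmn => //.
    + move=> hlt _.
      have htl2 : tl a n <= tl a m.+2 := tl_le (ltn0Sn m.+1) hlt.
      have htlS2 := tlS (ltn0Sn m).
      have hk1 : 2^-m.+1 <= pw (a m.+1) := hk _ (ltn0Sn m).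
      have hq : pw (a m.+1) <= pw (y - x).
        apply: pw_le; [exact/ltW/a_gt0|].
        by clear -Ha k0 hk pw htl2 htlS2 h3 h5 htlS; lra.
      rewrite pow2S in hk1.
      by clear -Ha k0 hk pw hk1 hq hpn; lra.
    + move=> -> _; rewrite pow2S; by clear -Ha k0 hk pw hpy; lra.
  by clear -Ha k0 hk pw hAx hBy p1 p2 p3 e0; lra.
-
  rewrite hmn in hMy.
  have -> : 2^-n * (2 - theta a (L x)) - 2^-m * (2 - theta a (L y)) =
     2^-n * (theta a (L y) - theta a (L x)) by rewrite hmn; ring.
  have hpn := pow2V_gt0 n.
  rewrite normrM (gtr0_norm hpn).
  have hI := IH (L y) (L x) hLy hLx.
  have hxy : `|x - y| = `|L y - L x| * a n.
    have -> : x - y = (L y - L x) * a n by rewrite mulrBl hMx hMy; ring.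
    by rewrite normrM (ger0_norm (ltW (a_gt0 h1))).
  rewrite hxy pwM ?normr_ge0 //; last exact/ltW/a_gt0.
  have hp : 2^-n <= pw (a n) := hk _ h1.
  have hW := pw_ge0 `|L y - L x|.
  have hhalf := pow2V_le_half h1.
  move: hI hp hW hhalf; set W := pw `|L y - L x|; set B := pw (a n); set p := 2^-n.
  set T := `|_ - _| => hI hp hW hhalf.
  have q1 : 0 <= p * (10 * W + 2 * 2^-N - T) by apply: mulr_ge0; [exact: ltW|rewrite subr_ge0].
  have q2 : 0 <= W * (B - p) by apply: mulr_ge0; rewrite ?subr_ge0.
  have q3 : 0 <= 2^-N * (2^-1 - p) by apply: mulr_ge0; [exact: ltW|rewrite subr_ge0].
  have hh : (2:R)^-1 * 2 = 1 by rewrite mulVf.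
  by clear -Ha k0 hk pw q1 q2 q3 hh; lra.
Qed.

End Holder.


Lemma powRXn (x p : R) n : 0 <= x -> (x ^+ n) `^ p = (x `^ p) ^+ n.
Proof.
move=> x0; rewrite -powR_mulrn // -powRrM mulrC powRrM powR_mulrn //.
exact: powR_ge0.
Qed.

Section SubHolder.
Variable k : R.
Hypothesis k0 : 0 < k.
Hypothesis hk : forall n, (1 <= n)%N -> a n `^ k <= (2:R)^-n.

Let pw u := u `^ k.

Lemma spw_le u v : 0 <= u -> u <= v -> pw u <= pw v.
Proof. by move=> u0 uv; apply: ge0_ler_powR => //; [exact: ltW|rewrite nnegrE //; apply: le_trans uv]. Qed.

Lemma spwM u v : 0 <= u -> 0 <= v -> pw (u * v) = pw u * pw v.
Proof. by move=> u0 v0; rewrite /pw powRM. Qed.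

Lemma spw_ge0 u : 0 <= pw u.
Proof. exact: powR_ge0. Qed.

Lemma spw0 : pw 0 = 0.
Proof. by rewrite /pw powR0 // gt_eqF. Qed.

Lemma spw1 : pw 1 = 1.
Proof. by rewrite /pw powR1. Qed.

Let r := (2^-1 : R) `^ k^-1.

Lemma r_gt0 : 0 < r.
Proof. by rewrite /r powR_gt0 // invr_gt0. Qed.

Lemma r_lt1 : r < 1.
Proof.
have hl : ln (2^-1 : R) < 0.
  apply: ln_lt0; apply/andP; split; first by rewrite invr_gt0.
  by rewrite invf_lt1 // ltr1n.
rewrite /r /powR gt_eqF ?invr_gt0 // -[X in _ < X]expR0 ltr_expR.
by rewrite pmulr_rlt0 // invr_gt0.
Qed.

Lemma pw_r : pw r = 2^-1.
Proof.
by rewrite /pw /r -powRrM mulVf ?gt_eqF // powRr1 // invr_ge0.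
Qed.

Lemma a_le_r n : (1 <= n)%N -> a n <= r ^+ n.
Proof.
move=> h.
have -> : a n = (a n `^ k) `^ k^-1.
  by rewrite -powRrM divff ?gt_eqF // powRr1 // ltW // a_gt0.
rewrite /r -powRXn ?invr_ge0 // exprVn.
apply: ge0_ler_powR; first by rewrite invr_ge0 ltW.
- by rewrite nnegrE powR_ge0.
- by rewrite nnegrE invr_ge0 exprn_ge0.
- exact: hk.
Qed.

Lemma tl_le_geo {j} : (1 <= j)%N -> tl a j <= r ^+ j / (1 - r).
Proof.
move=> hj; have hr0 := r_gt0; have hr1 := r_lt1.
have hb : 0 <= r ^+ j / (1 - r) by rewrite divr_ge0 ?exprn_ge0 ?subr_ge0 // ltW.
rewrite /tl; apply: limr_le; first exact: cvgP (tl_cvg hj).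
near=> N.
case: (leqP N j) => hNj; first by rewrite big_geq.
rewrite -(subnK (ltnW hNj)) addnC.
apply: (@le_trans _ _ (\sum_(j <= i < j + (N - j)) r ^+ i)).
  apply: ler_sum_nat => i /andP[hi _]; apply: a_le_r; exact: leq_trans hj hi.
rewrite geometric_partial_tail geometric_seriesE ?lt_eqF //=.
have ht : 0 <= r ^+ (N - j) by rewrite exprn_ge0 // ltW.
have hrj : 0 <= r ^+ j by rewrite exprn_ge0 // ltW.
have hinv : 0 <= (1 - r)^-1 by rewrite invr_ge0 subr_ge0 ltW.
rewrite ler_wpM2r //.
rewrite mulrBr mulr1 gerBl; exact: mulr_ge0.
Unshelve. all: by end_near.
Qed.

Definition Kc := 2 + pw (1 - r)^-1.

Lemma Kc_ge2 : 2 <= Kc.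
Proof. by rewrite /Kc lerDl spw_ge0. Qed.

Lemma tl_pw {j} : (1 <= j)%N -> pw (tl a j) <= Kc * 2^-j.
Proof.
move=> hj; have hr0 := r_gt0; have hr1 := r_lt1.
have hi : 0 <= (1 - r)^-1 by rewrite invr_ge0 subr_ge0 ltW.
apply: (@le_trans _ _ (pw (r ^+ j / (1 - r)))).
  by apply: spw_le; [exact/ltW/tl_gt0|exact: tl_le_geo].
have e1 : pw (r ^+ j) = 2^-j.
  have e0 : r `^ k = 2^-1 := pw_r.
  by rewrite /pw powRXn ?e0 ?exprVn //; exact: ltW.
have hr0' : 0 <= r ^+ j by rewrite exprn_ge0 // ltW.
rewrite spwM // e1 mulrC ler_wpM2r //; last by rewrite /Kc lerDr.
Qed.


Lemma pw3_ge1 : 1 <= pw 3.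
Proof. by rewrite -[X in X <= _]spw1; apply: spw_le; lra. Qed.

Lemma szero_lb {u} : 0 <= u <= 1 -> pw u <= Kc * theta a u.
Proof.
move=> hu; case: (eqVneq u 0) => [->|u0]; first by rewrite spw0 theta0 mulr0.
have hu' := pos01 hu u0; have [h1 h2 h3] := inA_d hu'.
rewrite theta_rec //; have /andP[t0 t1] := theta01 (La_in hu').
have e1 : pw u <= pw (tl a (d u)) by apply: spw_le => //; case/andP: hu.
have e2 := tl_pw h1.
have hK := Kc_ge2.
move: (d u) (Kc) e1 e2 hK => n K e1 e2 hK.
have p0 := pow2V_gt0 n.
have q : 0 <= K * 2^-n * (1 - theta a (L u)).
  by apply: mulr_ge0; [apply: mulr_ge0; [lra|exact: ltW]|lra].
by clear -Ha k0 hk pw r q e1 e2; lra.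
Qed.

Lemma sone_lb {v} : 0 <= v <= 1 -> pw (1 - v) <= Kc * (1 - theta a v).
Proof.
move=> hv; have hK := Kc_ge2.
case: (eqVneq v 0) => [->|v0].
  rewrite theta0 subr0 spw1; move: (Kc) hK => K hK; by clear -Ha k0 hk pw r hK; lra.
have hv' := pos01 hv v0; have [h1 h2 h3] := inA_d hv'.
have hL := La_in hv'; have /andP[t0 t1] := theta01 hL.
have ha1 : pw (a 1) <= 2^-1 by rewrite /pw -(expr1 (2:R)); exact: hk.
case: (ltngtP (d v) 1) => hd.
- by rewrite ltnS leqn0 in hd; move: h1; rewrite (eqP hd).
-
  have hpa : pw (1 - v) <= 1.
    rewrite -[X in _ <= X]spw1; apply: spw_le; last by case/andP: hv => ? ?; lra.
    by case/andP: hv => _ ?; rewrite subr_ge0.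
  have hth : theta a v <= 2^-1.
    rewrite theta_rec //.
    have hp := pow2V_le hd; rewrite pow2S pow2S expr0 invr1 in hp.
    have p0 := pow2V_gt0 (d v).
    move: (2^-(d v)) hp p0 => p hp p0.
    have q : 0 <= p * theta a (L v) by apply: mulr_ge0 => //; exact: ltW.
    have hh : (2:R)^-1 = 1 / 2 by rewrite div1r.
    rewrite hh in hp *.
    by clear -Ha k0 hk pw r hp q; lra.
  move: (Kc) hK => K hK.
  have hh : (2:R)^-1 = 1 / 2 by rewrite div1r.
  rewrite hh in hth.
  have q : 0 <= (K - 2) * (1 / 2 - theta a v) by apply: mulr_ge0; lra.
  by clear -Ha k0 hk pw r q hpa hth hK; lra.
- rewrite theta_rec // hd expr1.
  have hz := szero_lb hL.
  have hM := LaM hv'; rewrite hd tl1 in hM.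
  have -> : pw (1 - v) = pw (L v) * pw (a 1) by rewrite -hM spwM //; [case/andP: hL|exact/ltW/a_gt0].
  have hA := spw_ge0 (L v).
  move: hz ha1 hA; move: (Kc) hK => K hK.
  move: (pw (L v)) (pw (a 1)) => A B hz ha1 hA.
  have hAB : 0 <= A * (2^-1 - B) by apply: mulr_ge0 => //; rewrite subr_ge0.
  have h2i : (2:R)^-1 = 1/2 by rewrite div1r.
  rewrite h2i in hAB ha1 *.
  by clear -Ha k0 hk pw r hAB hz; lra.
Qed.

Lemma three_split p q s : 0 <= p -> 0 <= q -> 0 <= s ->
  pw (p + q + s) <= pw 3 * (pw p + pw q + pw s).
Proof.
move=> p0 q0 s0; set t := p + q + s.
have t0 : 0 <= t by rewrite /t !addr_ge0.
have key : forall z, t / 3 <= z -> pw t <= pw 3 * pw z.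
  move=> z hz; have -> : t = 3 * (t / 3) by rewrite mulrC divfK.
  rewrite spwM // ?divr_ge0 //; apply: ler_wpM2l; first exact: spw_ge0.
  by apply: spw_le => //; rewrite divr_ge0.
have hp := spw_ge0 p; have hq := spw_ge0 q; have hs := spw_ge0 s.
have h3 := spw_ge0 3.
have hsum : forall z, pw z <= pw p + pw q + pw s -> pw 3 * pw z <= pw 3 * (pw p + pw q + pw s).
  by move=> z hz; apply: ler_wpM2l.
case: (lerP (t / 3) p) => hp3.
  by apply: le_trans (key _ hp3) (hsum _ _); lra.
case: (lerP (t / 3) q) => hq3.
  by apply: le_trans (key _ hq3) (hsum _ _); lra.
have hs3 : t / 3 <= s.
  have : t / 3 * 3 = t by rewrite divfK.
  rewrite /t in hp3 hq3 * => e; lra.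
by apply: le_trans (key _ hs3) (hsum _ _); lra.
Qed.

Lemma SA {x} : 0 < x <= 1 -> pw (tl a (d x) - x) <= Kc * (2^-(d x) * theta a (L x)).
Proof.
move=> hx; have [h1 h2 h3] := inA_d hx; have hL := La_in hx.
have hz := szero_lb hL; have /andP[t0 t1] := theta01 hL.
rewrite -(LaM hx) spwM //; [|by case/andP: hL|exact/ltW/a_gt0].
have hp : pw (a (d x)) <= 2^-(d x) := hk _ h1.
have hA := spw_ge0 (L x); have hp0 := pow2V_gt0 (d x); have hK := Kc_ge2.
move: hz hp hA hp0 hK.
move: (pw (L x)) (pw (a (d x))) (2^-(d x)) (Kc) => A B p K hz hp hA hp0 hK.
have q1 : 0 <= A * (p - B) by apply: mulr_ge0; rewrite ?subr_ge0.
have q2 : 0 <= p * (K * theta a (L x) - A) by apply: mulr_ge0; [exact: ltW|rewrite subr_ge0].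
by clear -Ha k0 hk pw r q1 q2; lra.
Qed.

Lemma SB {x} : 0 < x <= 1 -> pw (x - tl a (d x).+1) <= Kc * (2^-(d x) * (1 - theta a (L x))).
Proof.
move=> hx; have [h1 h2 h3] := inA_d hx; have hL := La_in hx.
have hz := sone_lb hL; have /andP[t0 t1] := theta01 hL.
have -> : x - tl a (d x).+1 = (1 - L x) * a (d x).
  by rewrite mulrBl mul1r (LaM hx) (tlS h1); ring.
rewrite spwM //; [|by case/andP: hL => _ ?; rewrite subr_ge0|exact/ltW/a_gt0].
have hp : pw (a (d x)) <= 2^-(d x) := hk _ h1.
have hA := spw_ge0 (1 - L x); have hp0 := pow2V_gt0 (d x); have hK := Kc_ge2.
move: hz hp hA hp0 hK.
move: (pw (1 - L x)) (pw (a (d x))) (2^-(d x)) (Kc) => A B p K hz hp hA hp0 hK.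
have q1 : 0 <= A * (p - B) by apply: mulr_ge0; rewrite ?subr_ge0.
have q2 : 0 <= p * (K * (1 - theta a (L x)) - A) by apply: mulr_ge0; [exact: ltW|rewrite subr_ge0].
by clear -Ha k0 hk pw r q1 q2; lra.
Qed.

Definition Mc := Kc * pw 3.

Lemma Mc_ge2 : 2 <= Mc.
Proof.
have := Kc_ge2; have := pw3_ge1; rewrite /Mc; move: (Kc) (pw 3) => K P hK hP.
have q : 0 <= (K - 2) * (P - 1) by apply: mulr_ge0; lra.
by clear -Ha k0 hk pw r q hK hP; lra.
Qed.

Lemma sub_N N : forall x y, 0 <= x <= 1 -> 0 <= y <= 1 ->
  pw `|x - y| <= Mc * `|theta a x - theta a y| + Mc * 2^-N.
Proof.
elim: N => [|N IH] x y hx hy.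
  have hM := Mc_ge2.
  have h1 : pw `|x - y| <= 1.
    rewrite -[X in _ <= X]spw1; apply: spw_le => //; rewrite ler_norml.
    case/andP: hx => hx1 hx2; case/andP: hy => hy1 hy2; apply/andP; split; clear -Ha k0 hk pw r hx1 hx2 hy1 hy2; lra.
  have h2 := normr_ge0 (theta a x - theta a y).
  rewrite expr0 invr1 mulr1.
  move: (Mc) (pw `|x - y|) (`|theta a x - theta a y|) hM h1 h2 => M W T hM h1 h2.
  have q : 0 <= M * T by apply: mulr_ge0 => //; lra.
  by clear -Ha k0 hk pw r q hM h1; lra.
wlog xy : x y hx hy / x <= y.
  move=> H; case: (leP x y) => h; first exact: H.
  rewrite distrC (distrC (theta a x)); apply: H => //; exact: ltW.
have e0 := pow2V_gt0 N.
have hM := Mc_ge2.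
rewrite pow2S.
case: (eqVneq x 0) => [->|x0].
  rewrite theta0 sub0r normrN sub0r normrN.
  have hyy : 0 <= y by case/andP: hy.
  have /andP[ty0 ty1] := theta01 hy.
  rewrite (ger0_norm ty0) (ger0_norm hyy).
  have hz := szero_lb hy.
  have hK : Kc <= Mc.
    rewrite /Mc -[X in X <= _]mulr1; apply: ler_wpM2l; last exact: pw3_ge1.
    by have := Kc_ge2; move: (Kc) => K hK; clear -Ha k0 hk pw r hK; lra.
  move: (Kc) (Mc) (pw y) hz hK hM => K M W hz hK hM.
  have q1 : 0 <= (M - K) * theta a y by apply: mulr_ge0 => //; rewrite subr_ge0.
  have q2 : 0 <= M * (2^-N / 2) by apply: mulr_ge0; [apply: le_trans hM; clear -Ha k0 hk pw r; lra|apply: divr_ge0 => //; exact: ltW].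
  by clear -Ha k0 hk pw r q1 q2 hz; lra.
have hx' := pos01 hx x0.
have hy' : 0 < y <= 1 by case/andP: hx' => h _; case/andP: hy => _ h'; rewrite h' (lt_le_trans h xy).
have hmn := d_mono hx' hy' xy.
have [h1 h2 h3] := inA_d hx'; have [h4 h5 h6] := inA_d hy'.
have hLx := La_in hx'; have hLy := La_in hy'.
have /andP[tx0 tx1] := theta01 hLx; have /andP[ty0 ty1] := theta01 hLy.
have hMx := LaM hx'; have hMy := LaM hy'.
have hAx := SA hx'; have hBy := SB hy'.
rewrite (theta_rec hx') (theta_rec hy').
move: h1 h2 h3 hmn hMx hAx h4 h5 h6 hMy hBy.
move: (d x) (d y) => n m h1 h2 h3 hmn hMx hAx h4 h5 h6 hMy hBy.
have hK := Kc_ge2.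
case: (ltngtP m n) hmn => // hmn _.
-
  have hpn := pow2V_gt0 n; have hpm := pow2V_gt0 m.
  have hpnm : 2 * 2^-n <= (2:R)^-m.
    have := pow2V_le hmn; rewrite pow2S => hh; by clear -Ha k0 hk pw r hh; lra.
  have htl1 : tl a n <= tl a m.+1 := tl_le (ltn0Sn m) hmn.
  have htlS := tlS h4.
  have hyx : 0 <= y - x by rewrite subr_ge0.
  rewrite [`|x - y|]distrC (ger0_norm hyx).
  have q1 : 0 <= 2^-n * theta a (L x) by apply: mulr_ge0 (ltW hpn) tx0.
  have q2 : 0 <= 2^-m * (1 - theta a (L y)) by apply: mulr_ge0; [exact: ltW|rewrite subr_ge0].
  have hD : 2^-m * (2 - theta a (L y)) - 2^-n * (2 - theta a (L x)) =
     2^-m * (1 - theta a (L y)) + (2^-m - 2 * 2^-n) + 2^-n * theta a (L x) by ring.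
  rewrite distrC hD ger0_norm; last by clear -Ha k0 hk pw r q1 q2 hpnm; lra.
  have hT2 : pw (tl a m.+1 - tl a n) <= Kc * (2^-m - 2 * 2^-n).
    case: (ltngtP n m.+1) hmn => //.
    + move=> hlt _.
      have htl2 : tl a n <= tl a m.+2 := tl_le (ltn0Sn m.+1) hlt.
      have htlS2 := tlS (ltn0Sn m).
      have hq : pw (tl a m.+1 - tl a n) <= pw (tl a m.+1).
        apply: spw_le; last by have := tl_gt0 (ltn_trans (ltn0Sn m) hlt); clear -Ha k0 hk pw r; lra.
        by rewrite subr_ge0; exact: htl1.
      have hq2 := tl_pw (ltn0Sn m).
      have hpp := pow2V_le hlt; rewrite !pow2S in hpp hq2.
      move: (Kc) (2^-m) (2^-n) hK hq2 hpp => K P Q hK hq2 hpp.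
      have q3 : 0 <= K * (P / 2 / 2 - Q) by apply: mulr_ge0; [apply: le_trans hK; clear -Ha k0 hk pw r; lra|rewrite subr_ge0; exact: hpp].
      by clear -Ha k0 hk pw r q3 hq hq2; lra.
    + move=> -> _; rewrite subrr spw0 pow2S mulrCA divff // mulr1 subrr mulr0.
      done.
  have hsplit : y - x = (y - tl a m.+1) + (tl a m.+1 - tl a n) + (tl a n - x) by ring.
  have hts := three_split (y - tl a m.+1) (tl a m.+1 - tl a n) (tl a n - x).
  rewrite -hsplit in hts.
  have hts' := hts ltac:(clear -Ha k0 hk pw r h5 htlS; lra) ltac:(rewrite subr_ge0; exact: htl1) ltac:(rewrite subr_ge0; exact: h3).
  have h3p := pw3_ge1.
  rewrite /Mc.
  move: (pw (y - x)) (pw (y - tl a m.+1)) (pw (tl a m.+1 - tl a n)) (pw (tl a n - x)) (pw 3) (Kc) hts' h3p hAx hBy hT2 hK.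
  move: (2^-m * (1 - theta a (L y))) (2^-m - 2 * 2^-n) (2^-n * theta a (L x)) => T1 T2 T3.
  move=> W P1 P2 P3 P K hts' h3p hAx hBy hT2 hK.
  have qq : 0 <= P * (K * (T1 + T2 + T3) - (P1 + P2 + P3)) by apply: mulr_ge0; [apply: le_trans h3p; clear -Ha k0 hk pw r; lra|clear -Ha k0 hk pw r hAx hBy hT2; lra].
  have qe : 0 <= K * P * (2^-N / 2) by apply: mulr_ge0; [apply: mulr_ge0; [apply: le_trans hK|apply: le_trans h3p]; clear -Ha k0 hk pw r; lra|apply: divr_ge0 => //; exact: ltW].
  by clear -Ha k0 hk pw r qq qe hts'; lra.
-
  rewrite hmn in hMy.
  have -> : 2^-n * (2 - theta a (L x)) - 2^-m * (2 - theta a (L y)) =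
     2^-n * (theta a (L y) - theta a (L x)) by rewrite hmn; ring.
  have hpn := pow2V_gt0 n.
  rewrite normrM (gtr0_norm hpn).
  have hI := IH (L y) (L x) hLy hLx.
  have hxy : `|x - y| = `|L y - L x| * a n.
    have -> : x - y = (L y - L x) * a n by rewrite mulrBl hMx hMy; ring.
    by rewrite normrM (ger0_norm (ltW (a_gt0 h1))).
  rewrite hxy spwM ?normr_ge0 //; last exact/ltW/a_gt0.
  have hp : pw (a n) <= 2^-n := hk _ h1.
  have hW := spw_ge0 `|L y - L x|.
  have hB := spw_ge0 (a n).
  have hhalf := pow2V_le_half h1.
  move: hI hp hW hB hhalf hM.
  move: (pw `|L y - L x|) (pw (a n)) (2^-n) (`|theta a (L y) - theta a (L x)|) (Mc) (2^-N) hpn e0.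
  move=> W B p T M e hpn e0 hI hp hW hB hhalf hM.
  have q1 : 0 <= W * (p - B) by apply: mulr_ge0; rewrite ?subr_ge0.
  have q2 : 0 <= p * (M * T + M * e - W) by apply: mulr_ge0; [exact: ltW|rewrite subr_ge0].
  have q3 : 0 <= M * e * (2^-1 - p) by apply: mulr_ge0; [apply: mulr_ge0; [apply: le_trans hM; clear -Ha k0 hk pw r; lra|exact: ltW]|rewrite subr_ge0].
  have hh : (2:R)^-1 * 2 = 1 by rewrite mulVf.
  by clear -Ha k0 hk pw r q1 q2 q3 hh; lra.
Qed.

End SubHolder.
End Work.


Theorem lemma2p3 (R : realType) (a : nat -> R) :
  is_alpha_partition a ->
  holder_cont (inf (kappa_set a)) (theta a) /\
  (has_ubound (kappa_set a) -> sub_holder_cont (sup (kappa_set a)) (theta a)).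
Proof.
move=> Ha; split.
- have k0 := kinf_ge0 R a Ha.
  have hk : forall n, (0 < n)%N -> (2:R)^-n <= a n `^ inf (kappa_set a).
    by move=> n hn; apply: (key_low R a Ha _ hn); exact: (kinf_le R a Ha hn).
  exists 10 => // x y hx hy.
  apply: (le_eps R _ _ 2) => // N.
  exact: (holder_N R a Ha _ k0 hk N x y hx hy).
- move=> hu; have k0 := ksup_gt0 R a Ha hu; split => //.
  have hk : forall n, (0 < n)%N -> a n `^ sup (kappa_set a) <= (2:R)^-n.
    by move=> n hn; apply: (key_high R a Ha _ hn); exact: (ksup_ge R a hu hn).
  have hM := Mc_ge2 R _ k0.
  have hM0 : 0 < Mc R (sup (kappa_set a)) by apply: lt_le_trans hM.
  exists (Mc R (sup (kappa_set a)))^-1; first by rewrite invr_gt0.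
  move=> x y hx hy.
  rewrite mulrC ler_pdivrMr // mulrC.
  apply: (le_eps R _ _ (Mc R (sup (kappa_set a)))); first exact: ltW.
  move=> N; exact: (sub_N R a Ha _ k0 hk N x y hx hy).
Qed.
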